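(* No strategy proof and deterministic mechanism for locating two facilities on $[0,1]$ has approximation ratio smaller than $\frac{30}{29}$ for the optimal complemented Gini index of utilities.
   Context: Agents $1,\dots,n$ report locations $x_1,\dots,x_n\in[0,1]$; a deterministic mechanism maps each profile to a placement of two facilities $y_1,y_2\in[0,1]$. Agent $i$'s distance is $d_i=\min(|x_i-y_1|,|x_i-y_2|)$ and utility $u_i=1-d_i$. The Gini index of utilities is $G_u=\frac{\sum_i\sum_j|u_i-u_j|}{2n\sum_i u_i}$ and the complemented Gini index is $1-G_u$. A mechanism is strategy proof if no agent, by reporting a false location, can strictly reduce the distance from its true location to the nearest facility. The approximation ratio of a mechanism $M$ is the supremum over all profiles $x$ of $\mathrm{OPT}(x)/(1-G_u(M(x)))$, where $\mathrm{OPT}(x)$ is the maximum of $1-G_u$ over all placements of two facilities in $[0,1]$. *)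

(* Defs.v *)
From HB Require Import structures.
From mathcomp Require Import all_boot all_order all_algebra.
From mathcomp Require Import all_classical all_reals ereal.
Set Implicit Arguments. Unset Strict Implicit. Unset Printing Implicit Defensive.
Import Order.TTheory GRing.Theory Num.Theory.
Local Open Scope ring_scope.
Local Open Scope classical_set_scope.

Section FL.
Variable R : realType.

Definition in01 (x : R) : Prop := 0 <= x <= 1.

Definition valid_profile (n : nat) (x : 'I_n -> R) : Prop := forall i, in01 (x i).

Definition fdist (y : R * R) (a : R) : R := Num.min `|a - y.1| `|a - y.2|.

Definition util (y : R * R) (a : R) : R := 1 - fdist y a.

Definition gini (n : nat) (u : 'I_n -> R) : R :=
  (\sum_(i < n) \sum_(j < n) `|u i - u j|) / (2 * n%:R * \sum_(i < n) u i).

Definition cgini (n : nat) (x : 'I_n -> R) (y : R * R) : R :=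
  1 - gini (fun i => util y (x i)).

Definition OPT (n : nat) (x : 'I_n -> R) : R :=
  sup [set cgini x y | y in [set y : R * R | in01 y.1 /\ in01 y.2]].

Definition mechanism := forall n : nat, ('I_n -> R) -> R * R.

Definition mech_valid (M : mechanism) : Prop :=
  forall n (x : 'I_n -> R), valid_profile x -> in01 (M n x).1 /\ in01 (M n x).2.

Definition deviate (n : nat) (x : 'I_n -> R) (i : 'I_n) (a : R) : 'I_n -> R :=
  fun j => if j == i then a else x j.

Definition strategy_proof (M : mechanism) : Prop :=
  forall n (x : 'I_n -> R) (i : 'I_n) (a : R),
    valid_profile x -> in01 a ->
    fdist (M n x) (x i) <= fdist (M n (deviate x i a)) (x i).

Definition approx_ratio (M : mechanism) : \bar R :=
  ereal_sup [set r : \bar R | exists n : nat, (0 < n)%N /\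
     exists x : 'I_n -> R, valid_profile x /\ r = (OPT x / cgini x (M n x))%:E].

End FL.

(* Main.v *)
Require Import Defs.
From HB Require Import structures.
From mathcomp Require Import all_boot all_order all_algebra.
From mathcomp Require Import all_classical all_reals ereal.
From mathcomp Require Import ring lra.
Import Order.TTheory GRing.Theory Num.Theory.
Local Open Scope ring_scope.
Local Open Scope classical_set_scope.

Section Aux.
Variable R : realType.

Lemma minF (a b : R) : Num.min a b <= a /\ Num.min a b <= b /\
   (Num.min a b = a \/ Num.min a b = b).
Proof. rewrite minr_absE; case: (lerP 0 (a - b)) => h;
  [rewrite (ger0_norm h) | rewrite (ltr0_norm h)]; lra. Qed.

Lemma absF (a : R) : a <= `|a| /\ - a <= `|a|.
Proof. by split; [exact: ler_norm | rewrite -normrN; exact: ler_norm]. Qed.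

Lemma absU (a b : R) : 0 <= a -> 0 <= b -> `|a - b| <= a + b.
Proof. move=> ha hb; rewrite ler_norml; lra. Qed.

Definition o0 : 'I_3 := ord0.
Definition o1 : 'I_3 := @Ordinal 3 1 isT.
Definition o2 : 'I_3 := @Ordinal 3 2 isT.

Lemma gini3 (u : 'I_3 -> R) : gini u =
  (2 * (`|u o0 - u o1| + `|u o0 - u o2| + `|u o1 - u o2|)) / (6 * (u o0 + u o1 + u o2)).
Proof.
rewrite /gini !big_ord_recl !big_ord0.
have e1 : lift ord0 ord0 = o1 :> 'I_3 by apply: val_inj.
have e2 : lift ord0 (lift ord0 ord0) = o2 :> 'I_3 by apply: val_inj.
rewrite e1 e2 !subrr normr0 (distrC (u o1) (u o0)) (distrC (u o2) (u o0)) (distrC (u o2) (u o1)).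
congr (_ / _); ring.
Qed.

Lemma cg_bound (u : 'I_3 -> R) : (forall i, 0 <= u i) ->
  0 < u o0 + u o1 + u o2 ->
  u o0 + u o1 + u o2 <= 10 * (`|u o0 - u o1| + `|u o0 - u o2| + `|u o1 - u o2|) ->
  0 < 1 - gini u <= 29%:R / 30%:R.
Proof.
move=> h0 hs hS; rewrite gini3.
have a1 := absU _ _ (h0 o0) (h0 o1).
have a2 := absU _ _ (h0 o0) (h0 o2).
have a3 := absU _ _ (h0 o1) (h0 o2).
have h6 : 0 < 6 * (u o0 + u o1 + u o2) by lra.
apply/andP; split.
  rewrite subr_gt0 ltr_pdivrMr //; lra.
rewrite lerBlDr -lerBlDl.
have -> : 1 - 29%:R / 30%:R = 1 / 30%:R :> R by field.
rewrite ler_pdivrMr; last lra.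
rewrite mulrAC ler_pdivlMr //; lra.
Qed.

Lemma util_ge0 (y : R * R) a : in01 y.1 -> in01 y.2 -> in01 a -> 0 <= util y a.
Proof.
case: y => p q; rewrite /in01 /util /fdist /= => /andP[? ?] /andP[? ?] /andP[? ?].
have [h1 _] := minF `|a - p| `|a - q|.
have : `|a - p| <= 1 by rewrite ler_norml; lra.
lra.
Qed.

Lemma OPT_ge1 (x : 'I_3 -> R) (y : R * R) : valid_profile x -> in01 y.1 -> in01 y.2 ->
  (forall i, fdist y (x i) = fdist y (x o0)) -> 1 <= OPT x.
Proof.
move=> vx h1 h2 heq.
have hub : forall z, [set cgini x y | y in [set y : R * R | in01 y.1 /\ in01 y.2]] z -> z <= 1.
  move=> _ [w [w1 w2] <-]; rewrite /cgini lerBlDr lerDl /gini.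
  apply: divr_ge0; first by apply: sumr_ge0 => i _; apply: sumr_ge0 => j _.
  apply: mulr_ge0; first lra.
  by apply: sumr_ge0 => i _; apply: util_ge0.
have -> : 1 = cgini x y.
  rewrite /cgini /gini (eq_bigr (fun _ => 0)); first by rewrite big1 // mul0r subr0.
  move=> i _; apply: big1 => j _; by rewrite /util heq (heq j) subrr normr0.
apply: sup_upper_bound; last by exists y.
split; first by exists (cgini x y), y.
by exists 1 => z /hub.
Qed.

Lemma fdE (p q a d : R) : 0 <= d -> ((d = a - p \/ d = p - a) \/ (d = a - q \/ d = q - a)) ->
  (d <= a - p \/ d <= p - a) -> (d <= a - q \/ d <= q - a) -> fdist (p, q) a = d.
Proof.
move=> h0 h1 h2 h3; rewrite /fdist /=.
have [m1 [m2 m3]] := minF `|a - p| `|a - q|.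
have [b1 b2] := absF (a - p). have [b3 b4] := absF (a - q).
have c1 : `|a - p| = a - p \/ `|a - p| = - (a - p).
  by case: (lerP 0 (a - p)) => h; [left; rewrite ger0_norm | right; rewrite ltr0_norm].
have c2 : `|a - q| = a - q \/ `|a - q| = - (a - q).
  by case: (lerP 0 (a - q)) => h; [left; rewrite ger0_norm | right; rewrite ltr0_norm].
lra.
Qed.

Definition prof (a b c : R) : 'I_3 -> R := fun i => nth 0 [:: a; b; c] (val i).

Lemma valid3 a b c : in01 a -> in01 b -> in01 c -> valid_profile (prof a b c).
Proof. by move=> ? ? ? [[|[|[|k]]] Hk]. Qed.

Lemma approx_ge (M : mechanism R) (x : 'I_3 -> R) : valid_profile x -> 1 <= OPT x ->
  0 < cgini x (M 3%N x) <= 29%:R / 30%:R ->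
  ((30%:R / 29%:R : R)%:E <= approx_ratio M)%E.
Proof.
move=> vx ho /andP[c0 c1].
apply: (@le_trans _ _ (OPT x / cgini x (M 3%N x))%:E); last first.
  apply: ereal_sup_ubound; exists 3%N; split => //; exists x; split => //.
rewrite lee_fin ler_pdivlMr //.
have h : 0 <= 30%:R / 29%:R :> R by lra.
have := ler_wpM2l h c1.
lra.
Qed.

Lemma in01_half : in01 (2^-1 : R).
Proof. rewrite /in01; apply/andP; split; lra. Qed.
Lemma in01_0 : in01 (0 : R).
Proof. by rewrite /in01 lexx ler01. Qed.
Lemma in01_1 : in01 (1 : R).
Proof. by rewrite /in01 lexx ler01. Qed.

Definition X := prof 2^-1 0 1.

Lemma caseA (M : mechanism R) : mech_valid M -> strategy_proof M ->
  forall y : R, 7^-1 <= y <= 6%:R / 7%:R -> fdist (M 3%N X) y = 0 ->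
  ((30%:R / 29%:R : R)%:E <= approx_ratio M)%E.
Proof.
move=> Hv Hsp y /andP[hy1 hy2] h0.
have y01 : in01 y by rewrite /in01; apply/andP; split; lra.
pose Z := prof y 0 1.
have vZ : valid_profile Z by apply: valid3; [ | exact: in01_0 | exact: in01_1].
have dev : deviate Z o0 2^-1 = X.
  by apply: funext => -[[|[|[|k]]] Hk].
have := Hsp 3%N Z o0 2^-1 vZ in01_half.
rewrite dev h0 => hd.
have := Hv 3%N Z vZ.
case E: (M 3%N Z) => [r s] /= [/andP[hr1 hr2] /andP[hs1 hs2]].
rewrite E in hd.
apply: (@approx_ge M Z) => //.
  case: (lerP y 2^-1) => hy.
    apply: (@OPT_ge1 Z (y / 2, 1 - y / 2)) => //=;
      rewrite /in01; try (apply/andP; split; lra).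
    by move=> [[|[|[|k]]] Hk] //=; rewrite /Z /prof /= !(@fdE _ _ _ (y/2)) //; lra.
  apply: (@OPT_ge1 Z ((1 - y) / 2, (1 + y) / 2)) => //=;
    rewrite /in01; try (apply/andP; split; lra).
  move=> [[|[|[|k]]] Hk] //=; by rewrite /Z /prof /= !(@fdE _ _ _ ((1 - y) / 2)) //; lra.
rewrite E; apply: cg_bound.
- move=> i; apply: util_ge0 => //=; rewrite /in01; apply/andP; split => //.
- rewrite /Z /prof /util /fdist /= in hd *.
  have := minF `|y - r| `|y - s|. have := minF `|0 - r| `|0 - s|.
  have := minF `|1 - r| `|1 - s|.
  have := absF (y - r). have := absF (y - s). have := absF (0 - r).
  have := absF (0 - s). have := absF (1 - r). have := absF (1 - s).
  have : `|0 - r| <= 1 by rewrite ler_norml; lra.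
  have : `|0 - s| <= 1 by rewrite ler_norml; lra.
  have : `|1 - r| <= 1 by rewrite ler_norml; lra.
  have : `|1 - s| <= 1 by rewrite ler_norml; lra.
  lra.
rewrite /Z /prof /util /fdist /= in hd *.
have := minF `|y - r| `|y - s|. have := minF `|0 - r| `|0 - s|.
have := minF `|1 - r| `|1 - s|.
have := absF (y - r). have := absF (y - s). have := absF (0 - r).
have := absF (0 - s). have := absF (1 - r). have := absF (1 - s).
move: hd.
set d0 := Num.min `|y - r| `|y - s|.
set d1 := Num.min `|0 - r| `|0 - s|.
set d2 := Num.min `|1 - r| `|1 - s|.
have := absF (1 - d0 - (1 - d1)). have := absF (1 - d0 - (1 - d2)).
have := absF (1 - d1 - (1 - d2)).
move=> A1 A2 A3 A4 A5 A6 A7 A8 A9 M2 M1 M0 hd.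
have D0 : d0 = 0 by lra.
have RY : r = y \/ s = y by lra.
have Dm : 7^-1 <= d1 \/ 7^-1 <= d2 by lra.
lra.
Qed.

Lemma caseB (M : mechanism R) (p q : R) : M 3%N X = (p, q) ->
  0 <= p <= 1 -> 0 <= q <= 1 ->
  (p < 7^-1 \/ 6%:R / 7%:R < p) -> (q < 7^-1 \/ 6%:R / 7%:R < q) ->
  ((30%:R / 29%:R : R)%:E <= approx_ratio M)%E.
Proof.
move=> E /andP[hp1 hp2] /andP[hq1 hq2] hp hq.
have vX : valid_profile X by apply: valid3; [exact: in01_half | exact: in01_0 | exact: in01_1].
apply: (@approx_ge M X) => //.
  apply: (@OPT_ge1 X (4^-1, 3%:R / 4%:R)) => //=;
    rewrite /in01; try (apply/andP; split; lra).
  by move=> [[|[|[|k]]] Hk] //=; rewrite /X /prof /= !(@fdE _ _ _ (4^-1)) //; lra.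
rewrite E; apply: cg_bound.
- move=> i; apply: util_ge0 => //=; rewrite /in01; apply/andP; split => //.
- rewrite /X /prof /util /fdist /=.
  have := minF `|2^-1 - p| `|2^-1 - q|. have := minF `|0 - p| `|0 - q|.
  have := minF `|1 - p| `|1 - q|.
  have := absF (2^-1 - p). have := absF (2^-1 - q). have := absF (0 - p).
  have := absF (0 - q). have := absF (1 - p). have := absF (1 - q).
  have : `|2^-1 - p| <= 1 by rewrite ler_norml; lra.
  have : `|2^-1 - q| <= 1 by rewrite ler_norml; lra.
  have : `|0 - p| <= 1 by rewrite ler_norml; lra.
  have : `|0 - q| <= 1 by rewrite ler_norml; lra.
  have : `|1 - p| <= 1 by rewrite ler_norml; lra.
  have : `|1 - q| <= 1 by rewrite ler_norml; lra.
  have : `|0 - p| <= p by rewrite ler_norml; lra.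
  have : `|0 - q| <= q by rewrite ler_norml; lra.
  have : `|1 - p| <= 1 - p by rewrite ler_norml; lra.
  have : `|1 - q| <= 1 - q by rewrite ler_norml; lra.
  lra.
rewrite /X /prof /util /fdist /=.
have := minF `|2^-1 - p| `|2^-1 - q|. have := minF `|0 - p| `|0 - q|.
have := minF `|1 - p| `|1 - q|.
have := absF (2^-1 - p). have := absF (2^-1 - q). have := absF (0 - p).
have := absF (0 - q). have := absF (1 - p). have := absF (1 - q).
have : `|0 - p| <= p by rewrite ler_norml; lra.
have : `|0 - q| <= q by rewrite ler_norml; lra.
have : `|1 - p| <= 1 - p by rewrite ler_norml; lra.
have : `|1 - q| <= 1 - q by rewrite ler_norml; lra.
set d0 := Num.min `|2^-1 - p| `|2^-1 - q|.
set d1 := Num.min `|0 - p| `|0 - q|.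
set d2 := Num.min `|1 - p| `|1 - q|.
have := absF (1 - d0 - (1 - d1)). have := absF (1 - d0 - (1 - d2)).
have := absF (1 - d1 - (1 - d2)).
lra.
Qed.
End Aux.

Theorem theorem8 (R : realType) (M : mechanism R) :
  mech_valid M -> strategy_proof M ->
  ((30%:R / 29%:R : R)%:E <= approx_ratio M)%E.
Proof.
move=> Hv Hsp.
have vX : valid_profile (X R) by apply: valid3; [exact: in01_half | exact: in01_0 | exact: in01_1].
have := Hv 3%N (X R) vX.
case E: (M 3%N (X R)) => [p q] /= [hp hq].
have [hpA|hpA] := boolP ((7^-1 <= p) && (p <= 6%:R / 7%:R)).
  apply: (@caseA R M Hv Hsp p hpA); rewrite E /fdist /= subrr normr0.
  have := @minF R 0 `|p - q|; have := @absF R (p - q); lra.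
have [hqA|hqA] := boolP ((7^-1 <= q) && (q <= 6%:R / 7%:R)).
  apply: (@caseA R M Hv Hsp q hqA); rewrite E /fdist /= subrr normr0.
  have := @minF R `|q - p| 0; have := @absF R (q - p); lra.
apply: (@caseB R M p q E hp hq).
  by move: hpA; rewrite negb_and -!ltNge => /orP.
by move: hqA; rewrite negb_and -!ltNge => /orP.
Qed.
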